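(* Let $A\in\mathbb{R}^{n\times n}$, $A\ge0$ entrywise, be the weighted adjacency matrix of a directed stem-bud network with $\rho(A)<1$. If the weights of any of its stem edges are increased by nonnegative amounts (i.e., $A$ is replaced by $A+\sum_{q\in S}w_qe_{q+1}e_q^{\top}$ with $w_q\ge0$ and $S$ a set of stem edges), then the resulting matrix still has spectral radius less than $1$.
   Context: A directed stem-bud network on $n$ nodes has a junction $y\in\{1,\dots,n-1\}$ and weighted adjacency matrix $A=(a_{pq})$ whose only possibly nonzero entries are $a_{q+1,q}$ ($q=1,\dots,n-1$) and $a_{yn}$; $a_{pq}$ is the weight of edge $q\to p$. The stem consists of the edges $q\to q+1$ for $q=1,\dots,y-1$; the bud is the cycle $y\to\cdots\to n\to y$. For a directed line network ($a_{yn}=0$) all edges belong to the stem. $\rho$ is the spectral radius. *)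

(* Defs.v *)
From HB Require Import structures.
From mathcomp Require Import all_boot all_order all_algebra.
From mathcomp Require Import complex.
From mathcomp Require Import boolp classical_sets reals.
Set Implicit Arguments. Unset Strict Implicit. Unset Printing Implicit Defensive.
Import Order.TTheory GRing.Theory Num.Theory.
Local Open Scope ring_scope.
Local Open Scope classical_set_scope.

Section StemBud.
Variables (R : realType) (n : nat).

Definition complexify (A : 'M[R]_n) : 'M[R[i]]_n :=
  map_mx (fun x : R => (x%:C)%C) A.

Definition spectrum (A : 'M[R]_n) : set R[i] :=
  [set l | eigenvalue (complexify A) l].

Definition spectral_radius (A : 'M[R]_n) : R :=
  sup [set ComplexField.Normc.normc l | l in spectrum A].

(* Nodes 1..n are indexed 0..n-1; the junction y is given 0-based (y0 = y-1),
   so y0.+1 < n.  Edge q -> q+1 has weight A (q+1) q; edge n -> y has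
   weight A y0 (n-1). *)
Definition stem_bud (A : 'M[R]_n) (y0 : 'I_n) : Prop :=
  (y0.+1 < n)%N /\
  forall i j : 'I_n, A i j <> 0 ->
    (i : nat) = j.+1 \/ (i = y0 /\ (j : nat) = n.-1).

Definition bud_closed (A : 'M[R]_n) (y0 : 'I_n) : Prop :=
  exists j : 'I_n, (j : nat) = n.-1 /\ A y0 j <> 0.

(* Edge q -> q+1 (0-based source q) is a stem edge: q < y0 (i.e. q+1 < y in
   1-based numbering), or the network is a directed line (a_{yn} = 0), in which
   case all edges are stem edges. *)
Definition stem_edge (A : 'M[R]_n) (y0 : 'I_n) (q : 'I_n) : Prop :=
  (q.+1 < n)%N /\ ((q < y0)%N \/ ~ bud_closed A y0).

Definition edge_mx (q : 'I_n) : 'M[R]_n :=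
  \matrix_(i, j) ((((i : nat) == q.+1) && (j == q))%:R).

End StemBud.

(* Main.v *)
Require Import Defs.
From HB Require Import structures.
From mathcomp Require Import all_boot all_order all_algebra.
From mathcomp Require Import complex.
From mathcomp Require Import boolp classical_sets reals.
From mathcomp Require Import fingroup perm.
Import Order.TTheory GRing.Theory Num.Theory.
Local Open Scope ring_scope.

Lemma perm_fix_below n (s : 'S_n) m :
  (forall i : 'I_n, (i < m)%N -> s i = i \/ (i : nat) = (s i).+1) ->
  forall i : 'I_n, (i < m)%N -> s i = i.
Proof.
move=> H.
suff: forall k (i : 'I_n), (i : nat) = k -> (i < m)%N -> s i = i.
  by move=> Hk i; apply: Hk.
elim/ltn_ind => k IH i Hik Him.
case: (H i Him) => // Hi.
have Hsm : (s i < m)%N by apply: leq_trans Him; rewrite Hi.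
have := IH (s i) _ (s i) erefl Hsm.
rewrite -Hik Hi ltnSn => /(_ isT) /perm_inj Heq.
by move: Hi; rewrite Heq => /eqP; rewrite -[X in X == _]addn0 -addn1 eqn_add2l.
Qed.

Lemma det_eq_ok (F : comPzRingType) n (M1 M2 : 'M[F]_n)
  (ok : 'I_n -> 'I_n -> Prop) :
  (forall i j, ~ ok i j -> M1 i j = 0 /\ M2 i j = 0) ->
  (forall s : 'S_n, (forall i, ok i (s i)) -> forall i, M1 i (s i) = M2 i (s i)) ->
  \det M1 = \det M2.
Proof.
move=> H0 Hs.
rewrite /determinant; apply: eq_bigr => s _; congr (_ * _).
case: (pselect (forall i, ok i (s i))) => [Hok|Hn].
  by apply: eq_bigr => i _; apply: Hs.
have [i Hi] := (existsNP _).2 Hn.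
have [h1 h2] := H0 _ _ Hi.
rewrite (bigD1 i) //= [in RHS](bigD1 i) //=.
have E1 : forall x, M1 i (s i) * x = 0 by move=> x; rewrite h1 mul0r.
have E2 : forall x, M2 i (s i) * x = 0 by move=> x; rewrite h2 mul0r.
exact: (etrans (E1 _) (esym (E2 _))).
Qed.

Theorem corollary5p5 (R : realType) (n : nat) (A : 'M[R]_n) (y0 : 'I_n)
  (S : {set 'I_n}) (w : 'I_n -> R) :
  (forall i j, 0 <= A i j) ->
  stem_bud A y0 ->
  spectral_radius A < 1 ->
  (forall q, q \in S -> stem_edge A y0 q) ->
  (forall q, q \in S -> 0 <= w q) ->
  spectral_radius (A + \sum_(q in S) w q *: edge_mx R q) < 1.
Proof.
move=> _ [Hy0 Hsb] Hrho Hstem _.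
set B := A + _.
pose m := if asbool (bud_closed A y0) then (y0 : nat) else n.
have Sm : forall q, q \in S -> (q < m)%N.
  move=> q qS; rewrite /m; case: asboolP => Hb; last exact: ltn_ord.
  by case: (Hstem q qS) => _ [//|].
pose ok (i j : 'I_n) : Prop := (i : nat) = j \/ (i : nat) = j.+1 \/
   ((m <= i)%N /\ i = y0 /\ (j : nat) = n.-1).
have okA : forall i j : 'I_n, A i j <> 0 -> ok i j.
  move=> i j Hij; case: (Hsb i j Hij) => [Hi|[Hi Hj]]; first by rewrite /ok Hi; auto.
  rewrite /ok /m; right; right; split=> //.
  case: asboolP => Hb; first by rewrite Hi.
  by exfalso; apply: Hb; exists j; split=> //; rewrite -Hi.
have BE : forall i j : 'I_n, B i j = A i j + \sum_(q in S) w q * ((((i : nat) == q.+1) && (j == q))%:R).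
  by move=> i j; rewrite /B !mxE summxE; congr (_ + _); apply: eq_bigr => q _; rewrite !mxE.
have BA : forall i j : 'I_n, ~ (exists2 q, q \in S & (i : nat) = q.+1 /\ j = q) -> B i j = A i j.
  move=> i j Hn; rewrite BE big1 ?addr0 // => q qS.
  case: eqP => [Hiq|]; last by rewrite mulr0.
  case: eqP => [Hjq|]; last by rewrite mulr0.
  by exfalso; apply: Hn; exists q.
have okB : forall i j : 'I_n, B i j <> 0 -> ok i j.
  move=> i j Hij; case: (pselect (exists2 q, q \in S & (i : nat) = q.+1 /\ j = q)).
    by case=> q _ [Hi ->]; rewrite /ok Hi; auto.
  by move=> Hn; apply: okA; rewrite -BA.
clearbody B.
have Hchar : char_poly (complexify B) = char_poly (complexify A).
  apply: (@det_eq_ok _ _ _ _ ok).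
    move=> i j Hn; rewrite !mxE.
    have Hij : (i == j) = false by apply/eqP => E; apply: Hn; rewrite /ok E; auto.
    have HA : A i j = 0 by apply: contrapT => /okA.
    have HB : B i j = 0 by apply: contrapT => /okB.
    by rewrite Hij HA HB !mulr0n !sub0r oppr0.
  move=> s Hs i.
  have Hfix : forall k : 'I_n, (k < m)%N -> s k = k.
    apply: perm_fix_below => k km.
    case: (Hs k) => [E|[E|[Hmk _]]]; [left; exact: val_inj|by right|].
    by move: (leq_trans km Hmk); rewrite ltnn.
  rewrite !mxE BA //; case=> q qS [Hi Hj].
  have := Hfix q (Sm q qS); rewrite -Hj => /perm_inj E.
  have Eq : (i : nat) = q by rewrite -Hj E.
  by move: Hi; rewrite Eq => /n_Sn.
have Hspec : spectrum B = spectrum A.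
  rewrite /spectrum; apply/seteqP; split => l /=;
  by rewrite !eigenvalue_root_char Hchar.
by rewrite /spectral_radius Hspec.
Qed.
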